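(* Let $R=R_1\times\cdots\times R_t$ where $R_i=(\mathbb{F}_{q_i})^{m_i\times m_i}$ for prime powers $q_i$ and positive integers $m_i$. Then the normalized homogeneous weight $\omega$ on $R$ is given by \[ \omega(A_1,\ldots,A_t)=1-\prod_{i=1}^t\frac{(-1)^{r_i}q_i^{\binom{r_i}{2}}}{\alpha_{q_i,r_i}(q_i^{m_i})},\qquad r_i=\mathrm{rk}(A_i). \]
   Context: $\alpha_{q,r}(x)=\prod_{j=0}^{r-1}(x-q^j)$ (so $\alpha_{q,0}=1$) and $\binom{r}{2}=r(r-1)/2$. The normalized homogeneous weight on a finite Frobenius ring $R$ is the unique map $\omega:R\to\mathbb{R}$ with $\omega(0)=0$, $\omega(x)=\omega(y)$ whenever $Rx=Ry$, and $\sum_{y\in Rx}\omega(y)=|Rx|$ for every $x\in R\setminus\{0\}$. *)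

(* Defs.v *)
From HB Require Import structures.
From mathcomp Require Import all_boot all_order all_algebra all_field.
From mathcomp Require Import reals.
Set Implicit Arguments. Unset Strict Implicit. Unset Printing Implicit Defensive.
Import Order.TTheory GRing.Theory Num.Theory.
Local Open Scope ring_scope.

Definition prodMat (t : nat) (F : 'I_t -> finFieldType) (m : 'I_t -> nat) :=
  {dffun forall i : 'I_t, 'M[F i]_(m i)}.

Section ProdRing.
Variables (t : nat) (F : 'I_t -> finFieldType) (m : 'I_t -> nat).
Local Notation T := (prodMat F m).

Definition pzero : T := [ffun i => (0 : 'M[F i]_(m i))].
Definition pmul (a b : T) : T := [ffun i => (a i *m b i : 'M[F i]_(m i))].

Definition pideal (x : T) : {set T} := [set pmul r x | r : T].

Definition is_normalized_homogeneous_weight (K : realType) (w : T -> K) : Prop :=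
  [/\ w pzero = 0,
      (forall x y : T, pideal x = pideal y -> w x = w y) &
      (forall x : T, x != pzero -> \sum_(y in pideal x) w y = #|pideal x|%:R)].
End ProdRing.

Definition alpha (K : realType) (q r : nat) (x : K) : K :=
  \prod_(j < r) (x - (q ^ j)%:R).

(* Main.v *)
Require Import Defs.
From HB Require Import structures.
From mathcomp Require Import all_boot all_order all_algebra all_field.
From mathcomp Require Import reals.
From mathcomp Require Import ring lra.
Set Implicit Arguments. Unset Strict Implicit. Unset Printing Implicit Defensive.
Import Order.TTheory GRing.Theory Num.Theory.
Local Open Scope ring_scope.

Lemma dep_distr (R : comRingType) (I : finType) (T_ : I -> finType)
   (h : forall i, T_ i -> R) :
  \sum_(r : {dffun forall i : I, T_ i}) \prod_i h i (r i) =
  \prod_i \sum_(x : T_ i) h i x.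
Proof.
rewrite (reindex (@dffun_of_fprod I T_)); last first.
  by apply: onW_bij; exact: dffun_of_fprod_bij.
pose P_ i := [ffun x : T_ i => h i x].
transitivity (\sum_(t : fprod T_) \prod_(i in I) P_ i (t i)).
  by apply: eq_bigr => t _; apply: eq_bigr => i _; rewrite !ffunE.
rewrite big_fprod. rewrite -(bigA_distr_big_dep _ (fun i j => untag 0 (P_ i) j)).
apply: eq_bigr => i _.
transitivity (\sum_(x : T_ i) P_ i x); last by apply: eq_bigr => x _; rewrite ffunE.
by rewrite (big_tag (fun i x => P_ i x)).
Qed.

Definition phi (K : realType) (q n r : nat) : K :=
  (-1) ^+ r * (q ^ 'C(r, 2))%:R / alpha q r ((q ^ n)%:R : K).

Lemma alphaS (K : realType) q r (x : K) : alpha q r.+1 x = alpha q r x * (x - (q ^ r)%:R).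
Proof. by rewrite /alpha big_ord_recr. Qed.

Lemma alpha_neq0 (K : realType) q n r : (1 < q)%N -> (r <= n)%N -> alpha q r ((q ^ n)%:R : K) != 0.
Proof.
move=> q1 rn; rewrite /alpha; apply/prodf_neq0 => j _.
rewrite subr_eq0 eqr_nat; apply: contraTN isT => /eqP/expnI => h.
by move: (ltn_ord j); rewrite -(h q1) ltnNge rn.
Qed.

Lemma phi_step (K : realType) q n r : (1 < q)%N -> (r < n)%N ->
  (q ^ r)%:R * phi K q n r + ((q ^ n)%:R - (q ^ r)%:R) * phi K q n r.+1 = 0.
Proof.
move=> q1 rn; rewrite /phi alphaS binS bin1 expnD natrM exprS.
have a0 := alpha_neq0 K q1 (ltnW rn).
have d0 : ((q ^ n)%:R - (q ^ r)%:R : K) != 0.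
  rewrite subr_eq0 eqr_nat; apply/eqP => /expnI h.
  by move: rn; rewrite (h q1) ltnn.
field; by rewrite a0 d0.
Qed.

Section Mx.
Variable F : finFieldType.

Lemma card_submx n k (A : 'M[F]_(k, n)) :
  #|[pred v : 'rV[F]_n | (v <= A)%MS]| = (#|F| ^ \rank A)%N.
Proof.
transitivity #|[set u *m row_base A | u : 'rV[F]_(\rank A)]|.
  apply: eq_card => v; rewrite !inE; apply/idP/imsetP.
    move=> vA; have : (v <= row_base A)%MS by rewrite eq_row_base.
    by move=> /submxP [u ->]; exists u.
  by move=> [u _ ->]; rewrite -(eq_row_base A) submxMl.
rewrite card_imset ?card_mx ?mul1n //.
exact: row_free_inj (row_base_free A).
Qed.

Lemma rank_col_in n k (A : 'M[F]_(k, n)) (v : 'rV_n) :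
  (v <= A)%MS -> \rank (col_mx v A) = \rank A.
Proof. by move=> vA; rewrite -addsmxE; move/addsmx_idPr: vA => ->. Qed.

Lemma rank_col_out n k (A : 'M[F]_(k, n)) (v : 'rV_n) :
  ~~ (v <= A)%MS -> \rank (col_mx v A) = (\rank A).+1.
Proof.
move=> vA.
have v0 : v != 0 by apply: contraNneq vA => ->; rewrite sub0mx.
have := mxrank_sum_cap v A; rewrite -addsmxE rank_rV v0.
have -> : \rank (v :&: A)%MS = 0%N.
  apply/eqP; rewrite -leqn0 -ltnS.
  have rv1 : \rank v = 1%N by rewrite rank_rV v0.
  suff : (\rank (v :&: A)%MS < \rank v)%N by rewrite rv1.
  by rewrite (ltn_leqif (mxrank_leqif_sup _)) ?capmxSl // sub_capmx submx_refl.
by rewrite addn0 add1n.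
Qed.

Lemma card_F_gt1 : (1 < #|F|)%N.
Proof. exact: card_finNzRing_gt1. Qed.

Lemma sumA (K : realType) n k (A : 'M[F]_(k, n)) : (\rank A < n)%N ->
  \sum_(v : 'rV[F]_n) phi K #|F| n (\rank (col_mx v A)) = 0.
Proof.
move=> rA.
rewrite (bigID (fun v => (v <= A)%MS)) /=.
rewrite (eq_bigr (fun _ => phi K #|F| n (\rank A))) => [|v vA]; last by rewrite rank_col_in.
rewrite [X in _ + X](eq_bigr (fun _ => phi K #|F| n (\rank A).+1)) => [|v vA]; last by rewrite rank_col_out.
rewrite !sumr_const.
have c1 : #|(fun v : 'rV[F]_n => (v <= A)%MS)| = (#|F| ^ \rank A)%N.
  by rewrite -(card_submx A); apply: eq_card => v; rewrite !inE.
have c2 : #|(fun i : 'rV[F]_n => ~~ (i <= A)%MS)| = (#|F| ^ n - #|F| ^ \rank A)%N.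
  have cT : #|{: 'rV[F]_n}| = (#|F| ^ n)%N by rewrite card_mx mul1n.
  rewrite -c1 -cT -(cardC (fun v : 'rV[F]_n => (v <= A)%MS)) addKn.
  by apply: eq_card.
rewrite c1 c2 -(phi_step K card_F_gt1 rA).
congr (_ + _); first by rewrite mulr_natl.
rewrite -natrB; last by rewrite leq_exp2l ?card_F_gt1 // ltnW.
by rewrite mulr_natl.
Qed.

Lemma pid_block n s : (s <= n)%N ->
  pid_mx (1 + s) = block_mx (1%:M : 'M[F]_1) 0 0 (pid_mx s : 'M[F]_n) :> 'M[F]_(1 + n).
Proof.
move=> r_m.
rewrite -(subnKC r_m) pid_mx_block -col_mx0 -row_mx0.
by rewrite block_mxA castmx_id col_mx0 row_mx0 -scalar_mx_block -pid_mx_block.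
Qed.

Lemma sumB (K : realType) n (X : 'M[F]_n) : X != 0 ->
  \sum_(R : 'M[F]_n) phi K #|F| n (\rank (R *m X)) = 0.
Proof.
case: n X => [|n] X nz; first by move: nz; rewrite [X]flatmx0 eqxx.
have s0 : (0 < \rank X)%N by rewrite lt0n mxrank_eq0.
have h (R : 'M[F]_n.+1) : \rank (R *m X) = \rank (R *m col_ebase X *m (pid_mx (\rank X) : 'M[F]_n.+1))%N.
  by rewrite -{1}(mulmx_ebase X) !mulmxA mxrankMfree ?row_free_unit ?row_ebase_unit.
rewrite (eq_bigr _ (fun R _ => congr1 _ (h R))).
transitivity (\sum_(R : 'M[F]_n.+1) phi K #|F| n.+1 (\rank (R *m (pid_mx (\rank X) : 'M[F]_n.+1)))).
  rewrite [RHS](reindex_inj (row_free_inj (_ : row_free (col_ebase X)))) //.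
  by rewrite row_free_unit col_ebase_unit.
move: s0 (rank_leq_row X); case: (\rank X) => // s' _; rewrite ltnS => s'n.
rewrite (pid_block s'n).
rewrite (reindex (fun p : 'cV[F]_n.+1 * 'M[F]_(n.+1, n) => (row_mx p.1 p.2 : 'M[F]_(n.+1, 1 + n)))); last first.
  exists (fun R : 'M[F]_(n.+1, 1 + n) => (lsubmx R, rsubmx R)) => [[v B] _ | R _] /=.
    by rewrite row_mxKl row_mxKr.
  exact: hsubmxK.
rewrite -(pair_bigA _ (fun (v : 'cV[F]_n.+1) (B : 'M[F]_(n.+1, n)) => phi K #|F| n.+1 (\rank (row_mx v B *m block_mx (1%:M : 'M[F]_1) 0 0 (pid_mx s' : 'M[F]_n))))) /=.
rewrite exchange_big /= big1 // => B _.
transitivity (\sum_(u : 'rV[F]_n.+1) phi K #|F| n.+1 (\rank (col_mx u (B *m (pid_mx s' : 'M[F]_n))^T))); last first.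
  by apply: sumA; rewrite ltnS rank_leq_row.
rewrite [RHS](reindex (@trmx F n.+1 1)); last first.
  by exists (@trmx F 1 n.+1) => v _; rewrite trmxK.
apply: eq_bigr => v _.
by rewrite mul_row_block !mulmx0 mulmx1 addr0 add0r -mxrank_tr tr_row_mx.
Qed.
End Mx.

Section Prod.
Variables (K : realType) (t : nat) (F : 'I_t -> finFieldType) (m : 'I_t -> nat).
Local Notation T := (prodMat F m).

Definition w0 (A : T) : K := 1 - \prod_i phi K #|F i| (m i) (\rank (A i)).

Definition pone : T := [ffun i => (1%:M : 'M[F i]_(m i))].
Definition padd (a b : T) : T := [ffun i => (a i + b i : 'M[F i]_(m i))].

Lemma pmulE (r x : T) i : pmul r x i = r i *m x i.
Proof. by rewrite ffunE. Qed.

Lemma pone_mul (x : T) : pmul pone x = x.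
Proof. by apply/ffunP => i; rewrite !ffunE mul1mx. Qed.

Lemma pideal_refl (x : T) : x \in pideal x.
Proof. by apply/imsetP; exists pone => //; rewrite pone_mul. Qed.

Lemma pideal_sub (x y : T) : y \in pideal x -> pideal y \subset pideal x.
Proof.
case/imsetP => s _ ->; apply/subsetP => z /imsetP [r _ ->].
apply/imsetP; exists (pmul r s) => //.
by apply/ffunP => i; rewrite !ffunE mulmxA.
Qed.

Lemma pideal_rank (x y : T) : pideal x = pideal y -> forall i, \rank (x i) = \rank (y i).
Proof.
move=> e i.
have h (a b : T) : a \in pideal b -> (\rank (a i) <= \rank (b i))%N.
  by case/imsetP => r _ ->; rewrite pmulE mxrankM_maxr.
have hx : x \in pideal y by rewrite -e pideal_refl.
have hy : y \in pideal x by rewrite e pideal_refl.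
by apply/eqP; rewrite eqn_leq !h.
Qed.

Lemma w0_0 : w0 (pzero F m) = 0.
Proof.
rewrite /w0 big1 ?subrr // => i _.
by rewrite ffunE mxrank0 /phi /alpha big_ord0 expr0 mul1r expn0 divr1.
Qed.

Lemma w0_ideal (x y : T) : pideal x = pideal y -> w0 x = w0 y.
Proof. by move=> e; rewrite /w0; congr (_ - _); apply: eq_bigr => i _; rewrite (pideal_rank e). Qed.

Lemma fiber_card (x y : T) : y \in pideal x ->
  #|[pred r : T | pmul r x == y]| = #|[pred r : T | pmul r x == (pzero F m)]|.
Proof.
case/imsetP => r0 _ ->.
rewrite -!sum1_card (reindex_inj (h := padd^~ r0)); last first.
  move=> a b /ffunP e; apply/ffunP => i; move: (e i); rewrite !ffunE.
  by move/addIr.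
apply: eq_bigl => r; rewrite !inE; apply/eqP/eqP => /ffunP e; apply/ffunP => i;
  move: (e i); rewrite !ffunE mulmxDl.
  by move/(canRL (addrK _)); rewrite subrr.
by move=> ->; rewrite add0r.
Qed.

Lemma sum_pideal (G : T -> K) (x : T) :
  \sum_(r : T) G (pmul r x) = \sum_(y in pideal x) G y *+ #|[pred r : T | pmul r x == (pzero F m)]|.
Proof.
rewrite (partition_big (fun r => pmul r x) (mem (pideal x))) /=; last first.
  by move=> r _; apply/imsetP; exists r.
apply: eq_bigr => y yx.
rewrite (eq_bigr (fun _ => G y)); last by move=> r /eqP ->.
by rewrite sumr_const (fiber_card yx).
Qed.

Lemma sum_prod_phi (x : T) : x != (pzero F m) ->
  \sum_(y in pideal x) \prod_i phi K #|F i| (m i) (\rank (y i)) = 0.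
Proof.
move=> nz.
have c0 : #|[pred r : T | pmul r x == (pzero F m)]| != 0%N.
  apply/eqP => /card0_eq /(_ (pzero F m)); rewrite !inE => /negP; apply.
  by apply/eqP/ffunP => i; rewrite !ffunE mul0mx.
set c := #|_| in c0.
suff e0 : (\sum_(y in pideal x) \prod_i phi K #|F i| (m i) (\rank (y i))) *+ c = 0.
  by move/eqP: e0; rewrite mulrn_eq0 (negbTE c0) => /eqP.
rewrite -sumrMnl -sum_pideal.
rewrite (eq_bigr (fun r : T => \prod_i phi K #|F i| (m i) (\rank (r i *m x i)))); last first.
  by move=> r _; apply: eq_bigr => i _; rewrite pmulE.
rewrite (dep_distr (fun i (R : 'M[F i]_(m i)) => phi K #|F i| (m i) (\rank (R *m x i)))).
have [i xi] : exists i, x i != 0.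
  apply/existsP; apply: contraR nz => /existsPn h; apply/eqP/ffunP => i.
  by rewrite ffunE; apply/eqP; move: (h i); rewrite negbK.
by rewrite (bigD1 i) //= sumB // mul0r.
Qed.

Lemma w0_sum (x : T) : x != pzero F m -> \sum_(y in pideal x) w0 y = #|pideal x|%:R.
Proof. by move=> nz; rewrite /w0 sumrB sum_prod_phi // subr0 sumr_const. Qed.

Lemma uniq_w (w : T -> K) (hw : is_normalized_homogeneous_weight w) (x : T) : w x = w0 x.
Proof.
case: hw => w00 wid wsum.
have [N] := ubnP #|pideal x|; elim: N x => // N IH x hN.
have [->|nz] := eqVneq x (pzero F m); first by rewrite w00 w0_0.
have := wsum x nz; rewrite -(w0_sum nz).
rewrite (bigID (fun y => pideal y == pideal x)) [in RHS](bigID (fun y => pideal y == pideal x)) /=.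
have e2 : \sum_(y in pideal x | pideal y != pideal x) w y = \sum_(y in pideal x | pideal y != pideal x) w0 y.
  apply: eq_bigr => y /andP [yx ne]; apply: IH.
  have : pideal y \proper pideal x by rewrite properEneq ne pideal_sub.
  by move/proper_card => lt; apply: leq_trans lt _; rewrite -ltnS.
rewrite e2 => /addIr.
rewrite (eq_bigr (fun _ => w x)); last by move=> y /andP [_ /eqP e]; exact: wid.
rewrite [in RHS](eq_bigr (fun _ => w0 x)); last by move=> y /andP [_ /eqP e]; exact: w0_ideal.
rewrite !sumr_const => /eqP; rewrite eqr_pMn2r; first by move/eqP.
by apply/card_gt0P; exists x; rewrite unfold_in /= pideal_refl eqxx.
Qed.
End Prod.

Theorem theorem4p1 (K : realType) (t : nat) (F : 'I_t -> finFieldType)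
    (m : 'I_t -> nat) (hm : forall i, (0 < m i)%N)
    (w : prodMat F m -> K) (hw : is_normalized_homogeneous_weight w) :
  forall A : prodMat F m,
    w A = 1 - \prod_(i < t)
            ((-1) ^+ (\rank (A i)) * (#|F i| ^ 'C(\rank (A i), 2))%:R
             / alpha #|F i| (\rank (A i)) ((#|F i| ^ m i)%:R : K)).
Proof. by move=> A; exact: (uniq_w hw A). Qed.
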